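(* Let $E$ be an elliptic curve defined over a field $K$ with $\operatorname{char}K\neq 2$, and let $P\in E(K)$. Then at least one of the following holds: (i) $\delta_2^P$ is irreducible over $K$; (ii) $P$ is a $2$-torsion point; (iii) there exists $Q\in E(K)$ with $2Q=P$; (iv) there exist an elliptic curve $E'/K$, an isogeny $\psi:E'\to E$ of degree $2$ defined over $K$, and a point $Q\in E'(K)$ with $\psi(Q)=P$.
   Context: For $E$ with Weierstrass coordinate functions $x,y$ and $m\in\mathbb{Z}$, $\psi_m$ is the $m$-th division polynomial ($\psi_m^2\in K[x]$), $\theta_m=x\psi_m^2-\psi_{m+1}\psi_{m-1}$, so $x([m]R)=\theta_m(x(R))/\psi_m^2(x(R))$; and $\delta_m^P=\theta_m-x(P)\psi_m^2$ if $P\ne O$, $\delta_m^P=\psi_m^2$ if $P=O$. *)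

(* Defs.v *)
From HB Require Import structures.
From mathcomp Require Import all_boot all_order all_algebra.
Set Implicit Arguments. Unset Strict Implicit. Unset Printing Implicit Defensive.
Import Order.TTheory GRing.Theory Num.Theory.
Local Open Scope ring_scope.

(* Weierstrass equation  y^2 + a1 x y + a3 y = x^3 + a2 x^2 + a4 x + a6 *)
Record wcurve (K : fieldType) := WCurve { a1 : K; a2 : K; a3 : K; a4 : K; a6 : K }.

Section Weierstrass.
Variables (K : fieldType) (E : wcurve K).

Definition b2 : K := a1 E ^+ 2 + 4%:R * a2 E.
Definition b4 : K := 2%:R * a4 E + a1 E * a3 E.
Definition b6 : K := a3 E ^+ 2 + 4%:R * a6 E.
Definition b8 : K := a1 E ^+ 2 * a6 E + 4%:R * a2 E * a6 E - a1 E * a3 E * a4 E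
                     + a2 E * a3 E ^+ 2 - a4 E ^+ 2.
Definition disc : K := - b2 ^+ 2 * b8 - 8%:R * b4 ^+ 3 - 27%:R * b6 ^+ 2
                       + 9%:R * b2 * b4 * b6.

Definition elliptic : bool := disc != 0.

Inductive point := Inf | Aff of K & K.

Definition on_curve (P : point) : bool :=
  match P with
  | Inf => true
  | Aff x y => y ^+ 2 + a1 E * x * y + a3 E * y
               == x ^+ 3 + a2 E * x ^+ 2 + a4 E * x + a6 E
  end.

Definition dbl (P : point) : point :=
  match P with
  | Inf => Inf
  | Aff x y =>
    let d := 2%:R * y + a1 E * x + a3 E in
    if d == 0 then Inf else
    let l := (3%:R * x ^+ 2 + 2%:R * a2 E * x + a4 E - a1 E * y) / d in
    let nu := y - l * x in
    let x3 := l ^+ 2 + a1 E * l - a2 E - 2%:R * x in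
    Aff x3 (- (l + a1 E) * x3 - nu - a3 E)
  end.

Definition two_torsion (P : point) : Prop := dbl P = Inf.

(* division polynomials: psi_2^2, psi_3 (psi_1 = 1), theta_2 = x psi_2^2 - psi_3 psi_1 *)
Definition psi2sq : {poly K} :=
  4%:R *: 'X^3 + b2 *: 'X^2 + (2%:R * b4) *: 'X + b6%:P.
Definition psi3 : {poly K} :=
  3%:R *: 'X^4 + b2 *: 'X^3 + (3%:R * b4) *: 'X^2 + (3%:R * b6) *: 'X + b8%:P.
Definition theta2 : {poly K} := 'X * psi2sq - psi3 * 1.

Definition delta2 (P : point) : {poly K} :=
  match P with
  | Inf => psi2sq
  | Aff x _ => theta2 - x *: psi2sq
  end.

(* Coordinate ring K[x,y]/(Weierstrass eq.), an element p.1 + p.2 * y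
   represented by a pair of polynomials in x (free K[x]-module, basis 1, y). *)
Definition cubic : {poly K} := 'X^3 + a2 E *: 'X^2 + a4 E *: 'X + (a6 E)%:P.
Definition lin : {poly K} := a1 E *: 'X + (a3 E)%:P.
(* product, using y^2 = cubic - lin * y *)
Definition cmul (p q : {poly K} * {poly K}) : {poly K} * {poly K} :=
  (p.1 * q.1 + p.2 * q.2 * cubic, p.1 * q.2 + p.2 * q.1 - p.2 * q.2 * lin).
Definition cscale (r : {poly K}) (p : {poly K} * {poly K}) := (r * p.1, r * p.2).
Definition cadd (p q : {poly K} * {poly K}) := (p.1 + q.1, p.2 + q.2).

End Weierstrass.

Arguments Inf {K}.
Arguments Aff {K}.

(* A rational map E' --> E defined over K, written in coordinates:
     (x, y) |-> ( xn(x)/xd(x) , (y0(x) + y1(x) y) / yd(x) ).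
   Every morphism E' -> E commuting with negation has this shape, since
   K(E') = K(x) + K(x) y and x o psi is invariant under negation. *)
Record cmap (K : fieldType) := CMap { xn : {poly K}; xd : {poly K};
                                     y0 : {poly K}; y1 : {poly K}; yd : {poly K} }.

Section Isogeny.
Variables (K : fieldType) (E' E : wcurve K) (f : cmap K).

(* f maps E' into E: the Weierstrass equation of E holds identically in the
   function field K(E'); after clearing the denominator xd^3 yd^2 this is an
   identity in the coordinate ring of E'. *)
Definition maps_into : Prop :=
  let N := xn f in let M := xd f in let D := yd f in
  let Y := (y0 f, y1 f) in
  cadd (cscale (M ^+ 3) (cmul E' Y Y))
       (cscale (a1 E *: (N * M ^+ 2 * D) + a3 E *: (M ^+ 3 * D)) Y)
  = ((N ^+ 3 + a2 E *: (N ^+ 2 * M) + a4 E *: (N * M ^+ 2) + a6 E *: M ^+ 3)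
       * D ^+ 2, 0).

(* f is an isogeny of degree 2 defined over K: a morphism E' -> E sending O'
   to O (x o f has a pole at O', i.e. deg xn > deg xd), whose degree
   (= degree of the x-coordinate rational function xn/xd in lowest terms)
   is 2. *)
Definition isogeny_deg2 : Prop :=
  [/\ maps_into, xd f != 0, yd f != 0, coprimep (xn f) (xd f)
    & size (xn f) = 3%N /\ (size (xd f) < size (xn f))%N].

(* f(Q) = P  (evaluation of the morphism at a K-point; at points where the
   given coordinate formula is not visibly regular it is left undetermined,
   except at poles of x o f, which map to O). *)
Definition maps_to (Q : point K) (P : point K) : Prop :=
  match Q with
  | Inf => P = Inf
  | Aff x y =>
    if (xd f).[x] == 0 then P = Inf
    else (yd f).[x] != 0 /\
         P = Aff ((xn f).[x] / (xd f).[x])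
                 (((y0 f).[x] + (y1 f).[x] * y) / (yd f).[x])
  end.

End Isogeny.

(* Main.v *)
Require Import Defs.
From HB Require Import structures.
From mathcomp Require Import all_boot all_order all_algebra.
From mathcomp Require Import ring lra zify.
From Stdlib Require Import Classical.
Set Implicit Arguments. Unset Strict Implicit. Unset Printing Implicit Defensive.
Import Order.TTheory GRing.Theory Num.Theory.
Local Open Scope ring_scope.


Section S.
Variables (K : fieldType) (E : wcurve K).
Hypothesis h2 : (2%:R : K) != 0.

Lemma h4 : (4%:R : K) != 0.
Proof. by rewrite (_ : 4%:R = 2%:R * 2%:R) ?mulf_neq0 // -natrM. Qed.
Lemma h8 : (8%:R : K) != 0.
Proof. by rewrite (_ : 8%:R = 4%:R * 2%:R) ?mulf_neq0 ?h4 // -natrM. Qed.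
Lemma h16 : (16%:R : K) != 0.
Proof. by rewrite (_ : 16%:R = 8%:R * 2%:R) ?mulf_neq0 ?h8 // -natrM. Qed.

Definition h1 := a1 E / 2%:R.
Definition h3 := a3 E / 2%:R.
Definition c2 := a2 E + h1 ^+ 2.
Definition c1 := a4 E + 2%:R * h1 * h3.
Definition c0 := a6 E + h3 ^+ 2.
Definition g (x : K) := x ^+ 3 + c2 * x ^+ 2 + c1 * x + c0.
Definition g' (x : K) := 3%:R * x ^+ 2 + 2%:R * c2 * x + c1.
Definition eta (x y : K) := y + h1 * x + h3.

Lemma oncurveE x y : on_curve E (Aff x y) = (eta x y ^+ 2 == g x).
Proof.
rewrite /on_curve -[X in _ = X]subr_eq0 -subr_eq0.
congr (_ == 0).
rewrite /eta /g /c2 /c1 /c0 /h1 /h3. field. done.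
Qed.

Definition lam x y := g' x / (2%:R * eta x y).
Definition X2 x y := lam x y ^+ 2 - c2 - 2%:R * x.

Lemma dblE x y : 2%:R * y + a1 E * x + a3 E != 0 ->
  dbl E (Aff x y) = Aff (X2 x y) (- lam x y * (X2 x y - x) - eta x y - h1 * X2 x y - h3).
Proof.
move=> hd; rewrite /dbl (negbTE hd).
have hde : 2%:R * eta x y = 2%:R * y + a1 E * x + a3 E.
  by rewrite /eta /h1 /h3; field.
have he : eta x y != 0 by apply: contraNneq hd => he; rewrite -hde he mulr0.
rewrite /X2 /lam /g' /eta /c2 /c1 /h1 /h3 in he *.
congr Aff; field; rewrite ?he //.
all: by rewrite h2 /= mulrC.
Qed.


Lemma psi2sqE r : (psi2sq E).[r] = 4%:R * g r.
Proof.
rewrite /psi2sq !hornerE /g /c2 /c1 /c0 /h1 /h3 /b2 /b4 /b6.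
rewrite /=; field; exact h2.
Qed.

Lemma delta2E xP yP r : (delta2 E (Aff xP yP)).[r] =
  g' r ^+ 2 - 4%:R * (2%:R * r + c2 + xP) * g r.
Proof.
rewrite /delta2 /theta2 /psi2sq /psi3 !hornerE /= /g /g' /c2 /c1 /c0 /h1 /h3 /b2 /b4 /b6 /b8; field; exact h2.
Qed.

Lemma disc_g e : g e = 0 ->
  disc E = 16%:R * g' e ^+ 2 * ((3%:R * e + c2) ^+ 2 - 4%:R * g' e).
Proof.
move=> he.
have ha6 : a6 E = - (e ^+ 3 + c2 * e ^+ 2 + c1 * e) - h3 ^+ 2.
  by move: he; rewrite /g /c0 => H; apply/eqP; rewrite -subr_eq0 -{}H; apply/eqP; ring.
rewrite /disc /b2 /b4 /b6 /b8 ha6 /g' /c2 /c1 /h1 /h3; field; exact h2.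
Qed.

Lemma root_case xP yP r : on_curve E (Aff xP yP) -> eta xP yP != 0 -> disc E != 0 ->
  (delta2 E (Aff xP yP)).[r] = 0 ->
  exists Q, on_curve E Q /\ dbl E Q = Aff xP yP.
Proof.
move=> hP heP hdisc; rewrite delta2E => hD.
have hg : g r != 0.
  apply: contraNneq hdisc => hg0; rewrite (disc_g hg0).
  move: hD; rewrite hg0 mulr0 subr0 => /eqP; rewrite expf_eq0 /= => /eqP ->.
  by rewrite !(mulr0, mul0r, expr2).
have hx : xP = g' r ^+ 2 / (4%:R * g r) - c2 - 2%:R * r.
  apply/eqP; rewrite -subr_eq0; apply/eqP.
  have -> : xP - (g' r ^+ 2 / (4%:R * g r) - c2 - 2%:R * r) =
     - (g' r ^+ 2 - 4%:R * (2%:R * r + c2 + xP) * g r) / (4%:R * g r).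
    by field; rewrite hg h4.
  by rewrite hD oppr0 mul0r.
set eP := eta xP yP.
have hyP : yP = eP - h1 * xP - h3 by rewrite /eP /eta; ring.
have hP2 : eP ^+ 2 = g xP by move: hP; rewrite oncurveE => /eqP.
set h := - (g' r * (xP - r) + 2%:R * g r) / (2%:R * g r).
have hgh : g xP = g r * h ^+ 2.
  rewrite /h hx; move: hg; rewrite /g /g' => hg; field.
  by rewrite hg h2 h4.
have hh : h != 0.
  apply: contraNneq heP => h0.
  have : eP ^+ 2 == 0 by rewrite hP2 hgh h0 expr2 !mulr0.
  by rewrite expf_eq0.
have hR2 : (eP / h) ^+ 2 = g r.
  by rewrite expr_div_n hP2 hgh; field; rewrite hh.
have heR : eP / h != 0 by rewrite mulf_neq0 ?invr_eq0.
have hetaR : eta r (eP / h - h1 * r - h3) = eP / h by rewrite /eta; ring.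
exists (Aff r (eP / h - h1 * r - h3)); split.
  by rewrite oncurveE hetaR hR2.
have hd : 2%:R * (eP / h - h1 * r - h3) + a1 E * r + a3 E != 0.
  have -> : 2%:R * (eP / h - h1 * r - h3) + a1 E * r + a3 E = 2%:R * (eP / h).
    by rewrite /h1 /h3; field; rewrite h2 hh.
  by rewrite mulf_neq0.
rewrite dblE // /lam hetaR.
have hX : X2 r (eP / h - h1 * r - h3) = xP.
  rewrite /X2 /lam hetaR; apply/eqP; rewrite -subr_eq0; apply/eqP.
  rewrite [in X in _ - X]hx.
  have -> : (g' r / (2%:R * (eP / h))) ^+ 2 - c2 - 2%:R * r -
     (g' r ^+ 2 / (4%:R * g r) - c2 - 2%:R * r) =
     - g' r ^+ 2 / (4%:R * (eP/h) ^+ 2 * g r) * ((eP / h) ^+ 2 - g r).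
    by field; rewrite hh hg heP h4 h2.
  by rewrite hR2 subrr mulr0.
rewrite hX hyP; congr Aff.
apply/eqP; rewrite -subr_eq0; apply/eqP.
have -> : - (g' r / (2%:R * (eP / h))) * (xP - r) - eP / h - h1 * xP - h3 -
    (eP - h1 * xP - h3) = - (1 + h) / (eP / h) * ((eP / h) ^+ 2 - g r).
  have hN : - (g' r * (xP - r) + 2%:R * g r) != 0.
    by move: hh; rewrite /h mulf_eq0 negb_or => /andP[].
  by rewrite /h; field; rewrite hg h2 hN heP.
by rewrite hR2 subrr mulr0.
Qed.
End S.
Section Iso.
Variables (K : fieldType) (al1 A2 al3 A4 e : K).
Definition ic2 := A2 + al1 ^+ 2.
Definition ic1 := A4 + 2%:R * al1 * al3.
Definition Ecur := WCurve (2%:R * al1) A2 (2%:R * al3) A4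
   (- (e ^+ 3 + ic2 * e ^+ 2 + ic1 * e) - al3 ^+ 2).
Definition ia := 3%:R * e + ic2.
Definition ib := 3%:R * e ^+ 2 + 2%:R * ic2 * e + ic1.
Definition im := ia ^+ 2 - 4%:R * ib.
Definition Eiso := WCurve 0 (- (2%:R * ia)) 0 im 0.
Definition ixn : {poly K} := 'X^2 + (4%:R * e - 2%:R * ia)%:P * 'X + im%:P.
Definition fiso := CMap ixn ((4%:R : K)%:P * 'X)
  (- ('X * ((2%:R * al1)%:P * ixn + (8%:R * al3)%:P * 'X)))
  (im%:P - 'X^2) ((8%:R : K)%:P * 'X^2).

Lemma maps_into_iso : maps_into Eiso Ecur fiso.
Proof.
rewrite /maps_into /cmul /cscale /cadd /cubic /lin /fiso /Eiso /Ecur /= /ixn /im /ib /ia /ic1 /ic2.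
rewrite -!mul_polyC.
congr pair.
  ring.
ring.
Qed.
End Iso.

Lemma isog (K : fieldType) (h2 : (2%:R : K) != 0) (al1 A2 al3 A4 e xP yP XQ : K) :
  let E := Ecur al1 A2 al3 A4 e in
  elliptic E -> on_curve E (Aff xP yP) -> eta E xP yP != 0 ->
  4%:R * XQ * (xP - e) = (XQ - ia al1 A2 e) ^+ 2 - 4%:R * ib al1 A2 al3 A4 e ->
  exists (E' : wcurve K) (f : cmap K),
        [/\ elliptic E', isogeny_deg2 E' E f &
            exists Q : point K, on_curve E' Q /\ maps_to f Q (Aff xP yP)].
Proof.
move=> E hell hP heP hK2.
have hge : g E e = 0.
  by rewrite /g /c2 /c1 /c0 /h1 /h3 /E /Ecur /ic2 /ic1 /=; field.
have hdisc := disc_g h2 hge.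
have ha : 3%:R * e + c2 E = ia al1 A2 e.
  by rewrite /c2 /h1 /ia /ic2 /E /Ecur /=; field.
have hb : g' E e = ib al1 A2 al3 A4 e.
  by rewrite /g' /c2 /c1 /h1 /h3 /ib /ic2 /ic1 /E /Ecur /=; field.
rewrite ha hb in hdisc.
set a := ia al1 A2 e in ha hK2 hdisc *.
set b := ib al1 A2 al3 A4 e in hb hK2 hdisc *.
have hb0 : b != 0.
  by apply: contraNneq hell => hb0; rewrite /elliptic hdisc hb0 expr2 !(mul0r, mulr0, eqxx).
have hm0 : im al1 A2 al3 A4 e != 0.
  by apply: contraNneq hell => hm0; rewrite /elliptic hdisc -/a -/b -[_ - _]/(im al1 A2 al3 A4 e) hm0 mulr0 eqxx.
set m := im al1 A2 al3 A4 e in hm0 *.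
have h4 : (4%:R : K) != 0 by rewrite (_ : 4%:R = 2%:R * 2%:R) ?mulf_neq0 // -natrM.
have h8 : (8%:R : K) != 0 by rewrite (_ : 8%:R = 4%:R * 2%:R) ?mulf_neq0 // -natrM.
have h16 : (16%:R : K) != 0 by rewrite (_ : 16%:R = 8%:R * 2%:R) ?mulf_neq0 // -natrM.
exists (Eiso al1 A2 al3 A4 e), (fiso al1 A2 al3 A4 e); split.
- rewrite /elliptic.
  have -> : disc (Eiso al1 A2 al3 A4 e) = 16%:R * 16%:R * m ^+ 2 * b.
    by rewrite /disc /b2 /b4 /b6 /b8 /Eiso /= /m /im -/a -/b; ring.
  by rewrite !mulf_neq0 // expf_neq0.
- split.
  + exact: maps_into_iso.
  + by rewrite /fiso /= mulf_neq0 ?polyC_eq0 ?polyX_eq0.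
  + by rewrite /fiso /= mulf_neq0 ?polyC_eq0 ?expf_neq0 ?polyX_eq0.
  + rewrite /fiso /= mul_polyC coprimepZr // -[X in coprimep _ X]subr0 -polyC0 coprimep_XsubC.
    by rewrite rootE /ixn !hornerE /= -/a -/m expr2 !(mulr0, mul0r, add0r).
  + have hs : size (ixn al1 A2 al3 A4 e) = 3%N.
      rewrite /ixn -addrA size_addl size_polyXn // size_MXaddC.
      by case: ifP => // _; rewrite size_polyC; case: (_ != 0).
    rewrite /fiso /= hs mul_polyC size_scale // size_polyX; split => //.
- set eP := eta E xP yP in heP *.
  have hP2 : eP ^+ 2 = g E xP by move: hP; rewrite oncurveE // => /eqP.
  have hyP : yP = eP - h1 E * xP - h3 E by rewrite /eP /eta; ring.
  have hXQ : XQ != 0.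
    apply: contraNneq hm0 => hX0; have := hK2; rewrite hX0 !(mulr0, mul0r, sub0r, sqrrN).
    by move=> ->; rewrite /m /im -/a -/b.
  have hx : xP = e + ((XQ - a) ^+ 2 - 4%:R * b) / (4%:R * XQ).
    by rewrite -hK2; field; rewrite h4 hXQ.
  set D := m - XQ ^+ 2.
  have hgx : g E xP = (xP - e) * D ^+ 2 / (16%:R * XQ ^+ 2).
    rewrite hx /D /m /im -/a -/b /a /b /ia /ib /g /c2 /c1 /c0 /h1 /h3 /E /Ecur /ic2 /ic1 /=.
    by field; rewrite hXQ h4 h2 h16.
  have hD : D != 0.
    apply: contraNneq heP => hD0.
    have : eP ^+ 2 == 0 by rewrite hP2 hgx hD0 expr2 !(mulr0, mul0r).
    by rewrite expf_eq0.
  exists (Aff XQ (8%:R * XQ ^+ 2 * eP / D)); split.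
    rewrite /on_curve /Eiso /=; apply/eqP; rewrite !mul0r !addr0.
    rewrite expr_div_n exprMn hP2 hgx hx /m /im -/a -/b.
    by field; rewrite hXQ h4 h16 hD.
  rewrite /maps_to /fiso /= !hornerE /=.
  rewrite (negbTE (mulf_neq0 h4 hXQ)); split.
    by rewrite !mulf_neq0.
  rewrite [in LHS]hyP; congr Aff.
    by rewrite hx -/a -/b; field; rewrite hXQ h4.
  rewrite -/m -/D /h1 /h3 /E /Ecur /= hx -/a -/b.
  by field; rewrite hXQ hD h2 h8.
Qed.


Lemma quad_alg (K : fieldType) (c2 c1 c0 x s S p P : K) :
  s + S = 4%:R * x -> p + P + s * S = - (2%:R * c1 + 4%:R * x * c2) ->
  s * P + S * p = 8%:R * c0 + 4%:R * x * c1 ->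
  p * P = c1 ^+ 2 - 4%:R * c2 * c0 - 4%:R * x * c0 ->
  s != S ->
  let e := (p - P) / (s - S) in
  e ^+ 3 + c2 * e ^+ 2 + c1 * e + c0 = 0 /\
  4%:R * (s + e + c2) * (x - e) = (s - 2%:R * e) ^+ 2 - 4%:R * (3%:R * e ^+ 2 + 2%:R * c2 * e + c1).
Proof.
move=> e3 e2 e1 e0 hsS e.
have hd : s - S != 0 by rewrite subr_eq0.
have hsig : p + P = - (2%:R * c1 + 4%:R * x * c2) - s * S by rewrite -e2 addrK.
have hd2 : (s - S) ^+ 2 = (4%:R * x) ^+ 2 - 4%:R * (s * S).
  by rewrite -e3; ring.
have hn2 : (p - P) ^+ 2 = (- (2%:R * c1 + 4%:R * x * c2) - s * S) ^+ 2
     - 4%:R * (c1 ^+ 2 - 4%:R * c2 * c0 - 4%:R * x * c0).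
  by rewrite -hsig -e0; ring.
have hdn : (s - S) * (p - P) = 4%:R * x * (- (2%:R * c1 + 4%:R * x * c2) - s * S)
     - 2%:R * (8%:R * c0 + 4%:R * x * c1).
  by rewrite -hsig -e1 -e3; ring.
have hC : ((s - S) * (p - P)) ^+ 2 = (s - S) ^+ 2 * (p - P) ^+ 2 by ring.
rewrite hdn hd2 hn2 in hC.
move: hd2 hn2 hdn hC.
set m := s * S => hd2 hn2 hdn hC.
split.
  apply: (mulIf (expf_neq0 4 hd)); rewrite mul0r.
  have -> : (e ^+ 3 + c2 * e ^+ 2 + c1 * e + c0) * (s - S) ^+ 4 =
    (p - P) ^+ 2 * ((s - S) * (p - P)) + c2 * (p - P) ^+ 2 * (s - S) ^+ 2
    + c1 * ((s - S) * (p - P)) * (s - S) ^+ 2 + c0 * ((s - S) ^+ 2) ^+ 2.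
    by rewrite /e; field.
  rewrite hd2 hn2 hdn.
  transitivity (- (c2 + x) * ((4%:R * x * (- (2%:R * c1 + 4%:R * x * c2) - m)
     - 2%:R * (8%:R * c0 + 4%:R * x * c1)) ^+ 2 - ((4%:R * x) ^+ 2 - 4%:R * m) *
     ((- (2%:R * c1 + 4%:R * x * c2) - m) ^+ 2
     - 4%:R * (c1 ^+ 2 - 4%:R * c2 * c0 - 4%:R * x * c0)))); first ring.
  by rewrite hC subrr mulr0.
apply/eqP; rewrite -subr_eq0; apply/eqP.
apply: (mulIf (expf_neq0 2 hd)); rewrite mul0r.
have -> : (4%:R * (s + e + c2) * (x - e) - ((s - 2%:R * e) ^+ 2 - 4%:R * (3%:R * e ^+ 2 + 2%:R * c2 * e + c1))) * (s - S) ^+ 2 =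
  4%:R * (p - P) ^+ 2 + (s - S) * (p - P) * (4%:R * x + 4%:R * c2)
   + (s - S) ^+ 2 * (m + c2 * (4%:R * x) + 4%:R * c1) + (s - S) ^+ 2 * (4%:R * x - s - S) * s.
  by rewrite /e /m; field.
rewrite hd2 hn2 hdn (_ : 4%:R * x - s - S = 0); first ring.
by rewrite -e3; ring.
Qed.


Lemma delta2_coef (K : fieldType) (E : wcurve K) xP yP i :
  (delta2 E (Aff xP yP))`_i =
  [:: - (b8 E + b6 E * xP); - (2%:R * b6 E + 2%:R * b4 E * xP);
      - (b4 E + b2 E * xP); - (4%:R * xP); 1]`_i.
Proof.
rewrite /delta2 /theta2 /psi2sq /psi3 mulr1.
rewrite !(coefB, coefD, coefN, coefZ, coefXM, coefXn, coefC, coefX).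
case: i => [|i] /=; first ring.
case: i => [|i] /=; first ring.
case: i => [|i] /=; first ring.
case: i => [|i] /=; first ring.
case: i => [|i] /=; first ring.
by rewrite !(mul0r, mulr0, addr0, subr0, nth_nil).
Qed.

Lemma coefM3 (K : fieldType) (p q : {poly K}) : (size p <= 3)%N -> (size q <= 3)%N ->
  [/\ (p * q)`_4 = p`_2 * q`_2, (p * q)`_3 = p`_1 * q`_2 + p`_2 * q`_1,
      (p * q)`_2 = p`_0 * q`_2 + p`_1 * q`_1 + p`_2 * q`_0,
      (p * q)`_1 = p`_0 * q`_1 + p`_1 * q`_0 & (p * q)`_0 = p`_0 * q`_0].
Proof.
move=> hp hq.
have p3 : p`_3 = 0 by rewrite nth_default // (leq_trans hp).
have p4 : p`_4 = 0 by rewrite nth_default // (leq_trans hp).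
have q3 : q`_3 = 0 by rewrite nth_default // (leq_trans hq).
have q4 : q`_4 = 0 by rewrite nth_default // (leq_trans hq).
rewrite !coefM !big_ord_recr !big_ord0 /= p3 p4 q3 q4.
split; ring.
Qed.


Lemma by_lin (K : fieldType) (X Y A B k : K) : X - Y = k * (A - B) -> A = B -> X = Y.
Proof. by move=> h hAB; apply/eqP; rewrite -subr_eq0 h hAB subrr mulr0. Qed.

Lemma quad_eq (K : fieldType) (c2 c1 c0 x s p P : K) : (2%:R : K) != 0 ->
  s + s = 4%:R * x -> p + P + s * s = - (2%:R * c1 + 4%:R * x * c2) ->
  s * P + s * p = 8%:R * c0 + 4%:R * x * c1 ->
  x ^+ 3 + c2 * x ^+ 2 + c1 * x + c0 = 0.
Proof.
move=> h2 e3 e2 e1.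
have h8 : (8%:R : K) != 0.
  by rewrite (_ : 8%:R = 2%:R * 2%:R * 2%:R) ?mulf_neq0 // -!natrM.
have hs : s = 2%:R * x.
  apply: (mulfI h2); rewrite (_ : 2%:R * s = s + s); last ring.
  by rewrite e3; ring.
have hsig : p + P = - (2%:R * c1 + 4%:R * x * c2) - s * s by rewrite -e2 addrK.
have : s * (p + P) = 8%:R * c0 + 4%:R * x * c1 by rewrite -e1; ring.
rewrite hsig hs => H.
apply: (mulfI h8); rewrite mulr0; apply: (by_lin (k := -1) _ H); ring.
Qed.

Lemma E_as_Ecur (K : fieldType) (h2 : (2%:R : K) != 0) (E : wcurve K) e :
  g E e = 0 -> E = Ecur (a1 E / 2%:R) (a2 E) (a3 E / 2%:R) (a4 E) e.
Proof.
case: E => A1 A2 A3 A4 A6; rewrite /g /c2 /c1 /c0 /h1 /h3 /= => H.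
rewrite /Ecur /ic2 /ic1; congr WCurve; try by field.
by apply: (by_lin (k := 1) _ H); field.
Qed.

Lemma size_delta2 (K : fieldType) (E : wcurve K) xP yP :
  size (delta2 E (Aff xP yP)) = 5%N.
Proof.
apply/eqP; rewrite eqn_leq; apply/andP; split.
  by apply/leq_sizeP => j hj; rewrite delta2_coef nth_default.
rewrite ltnNge; apply/negP => hs.
have := delta2_coef E xP yP 4; rewrite nth_default //= => /eqP.
by rewrite eq_sym oner_eq0.
Qed.

Theorem lemma4p1 (K : fieldType) (E : wcurve K) (P : point K) :
  (2%:R : K) != 0 -> elliptic E -> on_curve E P ->
  [\/ irreducible_poly (delta2 E P),
      two_torsion E P,
      (exists Q : point K, on_curve E Q /\ dbl E Q = P)
    | exists (E' : wcurve K) (f : cmap K),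
        [/\ elliptic E', isogeny_deg2 E' E f &
            exists Q : point K, on_curve E' Q /\ maps_to f Q P]].
Proof.
move=> h2 hell hP.
case: P hP => [|xP yP] hP.
  by apply: Or42.
have [hd|hd] := eqVneq (2%:R * yP + a1 E * xP + a3 E) 0.
  by apply: Or42; rewrite /two_torsion /dbl hd eqxx.
have heP : eta E xP yP != 0.
  apply: contraNneq hd => he.
  have -> : 2%:R * yP + a1 E * xP + a3 E = 2%:R * eta E xP yP.
    by rewrite /eta /h1 /h3; field.
  by rewrite he mulr0.
have [Hirr|Hn] := classic (irreducible_poly (delta2 E (Aff xP yP))).
  by apply: Or41.
have hs5 := size_delta2 E xP yP.
have [q [hq1 hqd hqe]] : exists q : {poly K}, [/\ size q != 1%N, q %| delta2 E (Aff xP yP)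
    & ~~ (q %= delta2 E (Aff xP yP))].
  apply: NNPP => hne; apply: Hn; split; first by rewrite hs5.
  move=> q hq hqd; apply: NNPP => hqe; apply: hne; exists q; split => //.
  by apply/negP.
case/dvdpP: hqd => q' hdel.
have hq0 : q != 0 by apply/eqP => h0; move: hs5; rewrite hdel h0 mulr0 size_poly0.
have hq'0 : q' != 0 by apply/eqP => h0; move: hs5; rewrite hdel h0 mul0r size_poly0.
have hsz : (size q' + size q).-1 = 5%N by rewrite -size_mul // -hdel.
have hsq5 : size q != 5%N.
  by apply: contra hqe => /eqP h; rewrite -dvdp_size_eqp ?hs5 ?h // hdel dvdp_mull.
have hsq0 : (0 < size q)%N by rewrite size_poly_gt0.
have hsq'0 : (0 < size q')%N by rewrite size_poly_gt0.
have rootcase : forall r, root (delta2 E (Aff xP yP)) r -> 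
   exists Q : point K, on_curve E Q /\ dbl E Q = Aff xP yP.
  by move=> r /eqP hr; apply: (root_case h2 hP heP hell hr).
have [hq2|hq3|hq4] : [\/ size q = 2%N, size q = 3%N | size q = 4%N].
- have : size q = 2%N \/ size q = 3%N \/ size q = 4%N.
    move: hq1 hsq5 hsz hsq0 hsq'0; set n := size q; set n' := size q'.
    move=> /eqP ? /eqP ? ? ? ?; lia.
  by case=> [->|[->|->]]; [apply: Or31|apply: Or32|apply: Or33].
- apply: Or43; have [r hr] := poly2_root hq2; apply: (rootcase r).
  by rewrite hdel rootM hr orbT.
2: { apply: Or43; have hq'2 : size q' = 2%N by move: hsz; rewrite hq4; lia.
     have [r hr] := poly2_root hq'2; apply: (rootcase r).
     by rewrite hdel rootM hr. }
have hq'3 : size q' = 3%N by move: hsz; rewrite hq3; lia.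
have [C4 C3 C2 C1 C0] := coefM3 (eq_leq hq'3) (eq_leq hq3).
rewrite -hdel !delta2_coef /= in C4 C3 C2 C1 C0.
move: C4 C3 C2 C1 C0.
set r0 := q'`_0; set r1 := q'`_1; set r2 := q'`_2.
set q0 := q`_0; set q1 := q`_1; set q2 := q`_2.
move=> C4 C3 C2 C1 C0.
have hq2 : q2 != 0.
  by apply/eqP => h0; move: C4; rewrite h0 mulr0 => /eqP; rewrite oner_eq0.
have hr2 : r2 = q2^-1 by apply: (mulIf hq2); rewrite -C4 mulVf.
rewrite hr2 in C3 C2 C1 C0.
set s := - (q1 / q2); set p := q0 / q2; set S := - (r1 * q2); set P' := r0 * q2.
have e3 : s + S = 4%:R * xP by apply: (by_lin (k := -1) _ (esym C3)); rewrite /s /S; field.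
have e2 : p + P' + s * S = - (2%:R * c1 E + 4%:R * xP * c2 E).
  apply: (by_lin (k := 1) _ (esym C2)).
  by rewrite /s /S /p /P' /c1 /c2 /h1 /h3 /b4 /b2; field; rewrite hq2 h2.
have e1 : s * P' + S * p = 8%:R * c0 E + 4%:R * xP * c1 E.
  apply: (by_lin (k := -1) _ (esym C1)).
  by rewrite /s /S /p /P' /c0 /c1 /c2 /h1 /h3 /b6 /b4 /b2; field; rewrite hq2 h2.
have e0 : p * P' = c1 E ^+ 2 - 4%:R * c2 E * c0 E - 4%:R * xP * c0 E.
  apply: (by_lin (k := 1) _ (esym C0)).
  by rewrite /s /S /p /P' /c0 /c1 /c2 /h1 /h3 /b8 /b6 /b4 /b2; field; rewrite hq2 h2.
have [hsS|hsS] := eqVneq s S.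
  exfalso; rewrite -hsS in e3 e2 e1.
  have hg : g E xP = 0 := quad_eq h2 e3 e2 e1.
  move: hP; rewrite oncurveE // hg expf_eq0 /=.
  by apply/negP.
have [K1 K2] := quad_alg e3 e2 e1 e0 hsS.
move: K1 K2; set e := (p - P') / (s - S) => K1 K2.
have hE := E_as_Ecur h2 K1.
have := @isog K h2 (a1 E / 2%:R) (a2 E) (a3 E / 2%:R) (a4 E) e xP yP (s + e + c2 E).
rewrite -hE => /(_ hell hP heP) H; apply: Or44; apply: H.
apply: (by_lin (k := 1) _ K2).
by rewrite /ia /ib /ic2 /ic1 /c2 /c1 /h1 /h3; field.
Qed.
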